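(* Let $k\ge2$ and $m\ge1$ be integers and consider any realization of the random $k$-tree $G(m)$. For an edge $e$ of $G(m)$ let $N(e)$ be the number of $k$-cliques of $G(m)$ containing $e$. Let $F$ be the spanning forest of $G(m)$ defined as follows: for each $1\le t\le m$, if the vertex $x$ born in round $t$ was joined to the $k$-clique $C$, then in $F$ the vertex $x$ is joined to a vertex $u\in V(C)$ with $N(xu)=\max_{v\in V(C)}N(xv)$ (ties broken arbitrarily). If $xy\in E(F)$, $x$ is born later than $y$, and the degree of $x$ in $G(m)$ is greater than $2k-2$, then $N(xy)\ge (k^2-k)/2$.
   Context: Random $k$-tree process: $G(0)$ is a clique on $k$ vertices (born in round $0$); for $t\ge1$, $G(t)$ is obtained from $G(t-1)$ by choosing a $k$-clique of $G(t-1)$ uniformly at random, creating a new vertex (born in round $t$), and joining it to all vertices of the chosen clique. *)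

(* Defs.v *)
From mathcomp Require Import all_boot.
Unset Printing Implicit Defensive.

(* Vertices are natural numbers: 0..k-1 form the initial clique G(0)
   (born in round 0), and vertex k+t-1 is the vertex born in round t >= 1.
   Hence V(G(t)) = {0, ..., k+t-1}.
   A realization (history) is c : nat -> seq nat, where c t is the
   k-clique of G(t-1) chosen in round t. *)

Definition born (k x : nat) : nat := if x < k then 0 else x - k + 1.

Definition kt_edge (k : nat) (c : nat -> seq nat) (t x y : nat) : bool :=
  [&& x < k + t, y < k + t, x != y &
      (maxn x y < k) || (minn x y \in c (maxn x y - k + 1))].

Definition is_kclique (k : nat) (c : nat -> seq nat) (t : nat) (C : seq nat) : bool :=
  [&& uniq C, size C == k, all (fun v => v < k + t) C &
      all (fun u => all (fun v => (u == v) || kt_edge k c t u v) C) C].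

Definition valid_history (k m : nat) (c : nat -> seq nat) : Prop :=
  forall t, 1 <= t <= m -> is_kclique k c t.-1 (c t).

Definition is_clique_set (k : nat) (c : nat -> seq nat) (t : nat)
  (S : {set 'I_(k + t)}) : bool :=
  [forall i in S, forall j in S, (i == j) || kt_edge k c t i j].

Definition Ncl (k : nat) (c : nat -> seq nat) (t x y : nat) : nat :=
  #|[set S : {set 'I_(k + t)} |
      [&& #|S| == k, is_clique_set k c t S,
          [exists i in S, nat_of_ord i == x] &
          [exists i in S, nat_of_ord i == y]]]|.

Definition kt_deg (k : nat) (c : nat -> seq nat) (t x : nat) : nat :=
  #|[set i : 'I_(k + t) | kt_edge k c t x i]|.

(* par : the choice of the F-neighbour of each vertex born in rounds 1..m:
   par x lies in the clique x was joined to and maximizes N(x _) over it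
   (ties broken arbitrarily, i.e. par is any such choice). *)
Definition forest_choice (k m : nat) (c : nat -> seq nat) (par : nat -> nat) : Prop :=
  forall t, 1 <= t <= m ->
    par (k + t - 1) \in c t /\
    forall v, v \in c t -> Ncl k c m (k + t - 1) v <= Ncl k c m (k + t - 1) (par (k + t - 1)).

Definition F_edge (k m : nat) (par : nat -> nat) (x y : nat) : bool :=
  ((k <= x < k + m) && (y == par x)) || ((k <= y < k + m) && (x == par y)).

(* Main.v *)
Require Import Defs.
From mathcomp Require Import all_boot zify.

Lemma born_mono k a b : a <= b -> born k a <= born k b.
Proof. rewrite /born; case: ifP; case: ifP; lia. Qed.

Lemma kt_edge_mono k c t t' a b : t <= t' -> kt_edge k c t a b -> kt_edge k c t' a b.
Proof.
move=> le /and4P [ha hb hab hr]; apply/and4P; split=> //; lia.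
Qed.

Lemma clique_edge k m c s a b : valid_history k m c -> 1 <= s <= m ->
  a \in (k + s - 1) :: c s -> b \in (k + s - 1) :: c s -> a != b ->
  kt_edge k c m a b.
Proof.
move=> vh hs; have /and4P [hu hsz hall hcl] := vh s hs.
have lt: forall u, u \in c s -> u < k + s - 1.
  by move=> u /(allP hall); lia.
have top: forall u, u \in c s -> kt_edge k c m (k + s - 1) u /\ kt_edge k c m u (k + s - 1).
  move=> u hu'; have := lt u hu'; move=> hl.
  have e1: maxn (k + s - 1) u = k + s - 1 by apply/maxn_idPl; lia.
  have e2: minn (k + s - 1) u = u by apply/minn_idPr; lia.
  have e3: maxn u (k + s - 1) = k + s - 1 by apply/maxn_idPr; lia.
  have e4: minn u (k + s - 1) = u by apply/minn_idPl; lia.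
  have e5: k + s - 1 - k + 1 = s by lia.
  split; apply/and4P; split; try lia;
    rewrite ?e1 ?e2 ?e3 ?e4 e5 hu' orbT //.
rewrite !inE => /orP [/eqP -> | ha] /orP [/eqP -> | hb] hne.
- by rewrite eqxx in hne.
- by case: (top b hb).
- by case: (top a ha).
- have := allP hcl a ha => /allP /(_ b hb); rewrite (negbTE hne) /=.
  apply: kt_edge_mono; lia.
Qed.

Lemma card_le_size n (A : {set 'I_n}) (L : seq nat) :
  (forall i, i \in A -> val i \in L) -> #|A| <= size L.
Proof.
move=> H; rewrite cardE.
have := uniq_leq_size (s1 := map val (enum A)) (s2 := L).
rewrite size_map; apply.
  by rewrite map_inj_uniq ?enum_uniq //; exact: val_inj.
by move=> _ /mapP [i Hi ->]; apply: H; rewrite -mem_enum.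
Qed.

Lemma card_mkS n (L : seq nat) : uniq L -> all (fun v => v < n) L ->
  #|[set i : 'I_n | val i \in L]| = size L.
Proof.
move=> hu ha; apply/eqP; rewrite eqn_leq; apply/andP; split.
  by apply: card_le_size => i; rewrite inE.
have := uniq_leq_size (s1 := pmap (insub : nat -> option 'I_n) L)
   (s2 := enum [set i : 'I_n | val i \in L]).
rewrite size_pmap_sub cardE.
have -> : count (fun v => v < n) L = size L by apply/eqP; rewrite -all_count.
apply; first exact: pmap_sub_uniq.
move=> i; rewrite mem_pmap_sub mem_enum inE //.
Qed.

Definition mkS k m (L : seq nat) : {set 'I_(k + m)} := [set i : 'I_(k + m) | val i \in L].

Lemma mkS_mem k m L1 L2 a : mkS k m L1 = mkS k m L2 -> a < k + m -> (a \in L1) = (a \in L2).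
Proof.
move=> E ha; have := congr1 (fun S : {set 'I_(k + m)} => Ordinal ha \in S) E.
by rewrite /mkS !inE.
Qed.

Definition Lf k (c : nat -> seq nat) s u := (k + s - 1) :: [seq y <- c s | y != u].

Lemma in_Ncl k m c s u a b : valid_history k m c -> 1 <= s <= m -> u \in c s ->
  a \in Lf k c s u -> b \in Lf k c s u ->
  mkS k m (Lf k c s u) \in [set S : {set 'I_(k + m)} |
      [&& #|S| == k, is_clique_set k c m S,
          [exists i in S, nat_of_ord i == a] &
          [exists i in S, nat_of_ord i == b]]].
Proof.
move=> vh hs hu ha hb.
have /and4P [hcu hsz hall hcl] := vh s hs.
have lt: forall w, w \in c s -> w < k + s - 1.
  by move=> w /(allP hall); lia.
have huniq : uniq (Lf k c s u).
  rewrite /Lf /= filter_uniq // andbT mem_filter; apply/negP => /andP [_ /lt]; lia.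
have hall' : all (fun v => v < k + m) (Lf k c s u).
  apply/allP => w; rewrite /Lf inE => /orP [/eqP -> | ]; first lia.
  by rewrite mem_filter => /andP [_ /lt]; lia.
have hsize : size (Lf k c s u) = k.
  rewrite /Lf /= size_filter.
  have := count_predC (pred1 u) (c s).
  have := count_uniq_mem u hcu; rewrite hu (eqP hsz).
  have -> : count (predC (pred1 u)) (c s) = count (fun y => y != u) (c s) by [].
  lia.
have hsub : forall w, w \in Lf k c s u -> w < k + m by move=> w /(allP hall').
have hex : forall w, w \in Lf k c s u -> [exists i in mkS k m (Lf k c s u), nat_of_ord i == w].
  move=> w hw; apply/existsP; exists (Ordinal (hsub w hw)); rewrite /mkS inE /= hw eqxx //.
rewrite inE; apply/and4P; split; [by rewrite card_mkS // hsize | | exact: hex | exact: hex].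
apply/forallP => i; apply/implyP; rewrite /mkS inE => hi.
apply/forallP => j; apply/implyP; rewrite inE => hj.
case: (eqVneq i j) => [//|hne] /=.
apply: (@clique_edge k m c s (nat_of_ord i) (nat_of_ord j) vh hs).
- move: hi; rewrite /Lf !inE => /orP [->//|]; rewrite mem_filter => /andP [_ ->]; by rewrite orbT.
- move: hj; rewrite /Lf !inE => /orP [->//|]; rewrite mem_filter => /andP [_ ->]; by rewrite orbT.
- by apply: contra hne => /eqP h; apply/eqP; apply: val_inj.
Qed.

Lemma Lf_inj k m c s1 s2 u1 u2 : valid_history k m c ->
  1 <= s1 <= m -> 1 <= s2 <= m -> u1 \in c s1 -> u2 \in c s2 ->
  mkS k m (Lf k c s1 u1) = mkS k m (Lf k c s2 u2) -> s1 = s2 /\ u1 = u2.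
Proof.
move=> vh h1 h2 hu1 hu2 E.
have lt: forall s w, 1 <= s <= m -> w \in c s -> w < k + s - 1.
  move=> s w hs; have /and4P [_ _ hall _] := vh s hs.
  by move/(allP hall); lia.
have key : forall s s' u u', 1 <= s <= m -> 1 <= s' <= m -> u \in c s -> u' \in c s' ->
    mkS k m (Lf k c s u) = mkS k m (Lf k c s' u') -> s' <= s.
  move=> s s' u u' hs hs' hu hu' E'.
  have hlt : k + s' - 1 < k + m by lia.
  have := @mkS_mem k m _ _ (k + s' - 1) E' hlt; rewrite /Lf !inE eqxx /=.
  move=> /orP [/eqP|]; first lia.
  by rewrite mem_filter => /andP [_ /(lt _ _ hs)]; lia.
have es : s1 = s2.
  by apply/eqP; rewrite eqn_leq (key _ _ _ _ h2 h1 hu2 hu1 (esym E)) (key _ _ _ _ h1 h2 hu1 hu2 E).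
subst s2; split=> //.
apply/eqP; apply/negP => /negP hne.
have hl := lt _ _ h1 hu1.
have hlt : u1 < k + m by lia.
have := @mkS_mem k m _ _ u1 E hlt; rewrite /Lf !inE !mem_filter eqxx hu1 /= eq_sym (negbTE hne) /=.
by rewrite orbT orbF => /eqP h; move: hl; rewrite -h ltnn.
Qed.

Lemma cnt1 (L : seq nat) a : uniq L -> a \in L -> count (fun u => u != a) L = size L - 1.
Proof.
move=> hu ha; have := count_predC (pred1 a) L.
have := count_uniq_mem a hu; rewrite ha.
have -> : count (predC (pred1 a)) L = count (fun u => u != a) L by [].
move=> ->; rewrite add1n => <-; by rewrite subn1.
Qed.

Lemma cnt2 (L : seq nat) a b : uniq L -> a \in L -> b \in L -> a != b ->
  count (fun u => (u != a) && (u != b)) L = size L - 2.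
Proof.
move=> hu ha hb hab.
have := count_predC (predU (pred1 a) (pred1 b)) L.
have := count_predUI (pred1 a) (pred1 b) L.
have -> : count (predI (pred1 a) (pred1 b)) L = 0.
  apply/eqP; rewrite -leqn0 leqNgt -has_count; apply/hasP => -[w _] /andP [/eqP -> /eqP h].
  by rewrite h eqxx in hab.
have := count_uniq_mem a hu; have := count_uniq_mem b hu; rewrite ha hb /=.
have -> : count (predC (predU (pred1 a) (pred1 b))) L = count (fun u : nat => (u != a) && (u != b)) L.
  by apply: eq_count => w /=; rewrite negb_or.
move=> h1 h2; rewrite /= in h1 h2; lia.
Qed.

Lemma count_sym (A B : seq nat) : uniq A -> uniq B -> count (mem A) B = count (mem B) A.
Proof.
move=> hA hB; rewrite -!size_filter; apply: perm_size; apply: uniq_perm.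
- exact: filter_uniq.
- exact: filter_uniq.
- by move=> w; rewrite !mem_filter andbC.
Qed.

Lemma count_sum (T : Type) (p : pred T) (s : seq T) : count p s = \sum_(i <- s) p i.
Proof. by elim: s => [|a s IH]; rewrite ?big_nil ?big_cons //= IH. Qed.

Lemma sum_le_const (T : eqType) (f : T -> nat) b (s : seq T) :
  (forall v, v \in s -> f v <= b) -> \sum_(v <- s) f v <= size s * b.
Proof.
elim: s => [|a s IH] H; rewrite ?big_nil ?big_cons //=.
have := H a (mem_head _ _); have := IH (fun v hv => H v (mem_behead (s := a :: s) hv)).
rewrite mulSn; lia.
Qed.

Lemma sum_tri n : 2 * \sum_(0 <= i < n) (n - i) = n * n.+1.
Proof.
elim: n => [|n IH]; first by rewrite big_geq.
rewrite big_nat_recl //.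
have -> : \sum_(0 <= i < n) (n.+1 - i.+1) = \sum_(0 <= i < n) (n - i).
  by apply: eq_bigr => i _; rewrite subSS.
rewrite mulnDr IH; lia.
Qed.

Lemma sumn_scale (T : Type) (p : pred T) b (s : seq T) :
  sumn [seq b * p i | i <- s] = b * count p s.
Proof. elim: s => [|a s IH] /=; [by rewrite muln0 | by rewrite IH mulnDr]. Qed.

Definition Qs k m (c : nat -> seq nat) t := [seq s <- iota t.+1 (m - t) | (k + t - 1) \in c s].

Lemma mem_Qs k m c t s : t <= m ->
  (s \in Qs k m c t) = [&& t < s, s <= m & (k + t - 1) \in c s].
Proof.
move=> htm; rewrite /Qs mem_filter mem_iota.
case: (k + t - 1 \in c s); rewrite ?andbF ?andbT //.
apply/idP/idP => /andP [h1 h2]; apply/andP; split; lia.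
Qed.

Lemma deg_bound k m c t : valid_history k m c -> 1 <= t <= m ->
  kt_deg k c m (k + t - 1) <= k + size (Qs k m c t).
Proof.
move=> vh ht.
have /and4P [hu hsz hall hcl] := vh t ht.
have -> : k + size (Qs k m c t) = size (c t ++ map (fun s => k + s - 1) (Qs k m c t)).
  by rewrite size_cat size_map (eqP hsz).
rewrite /kt_deg.
apply: card_le_size => i; rewrite inE => /and4P [h1 h2 h3 h4].
rewrite mem_cat; apply/orP.
case: (ltngtP (nat_of_ord i) (k + t - 1)) => hi.
- left; move: h4.
  have -> : maxn (k + t - 1) i = k + t - 1 by apply/maxn_idPl; lia.
  have -> : minn (k + t - 1) i = i by apply/minn_idPr; lia.
  have -> : k + t - 1 - k + 1 = t by lia.
  have -> : (k + t - 1 < k) = false by lia.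
  by [].
- right; move: h4.
  have -> : maxn (k + t - 1) i = i by apply/maxn_idPr; lia.
  have -> : minn (k + t - 1) i = k + t - 1 by apply/minn_idPl; lia.
  have -> : (nat_of_ord i < k) = false by lia.
  move=> /= hin; apply/mapP; exists (i - k + 1).
    rewrite mem_Qs; last lia.
    rewrite hin andbT; apply/andP; split; lia.
  lia.
- by rewrite hi eqxx in h3.
Qed.

Lemma rank_bound k m c t r : valid_history k m c -> 1 <= t <= m -> r < size (Qs k m c t) ->
  k - 1 - r <= count (mem (c t)) (c (nth 0 (Qs k m c t) r)).
Proof.
move=> vh ht hr.
set Q := Qs k m c t; set s := nth 0 Q r.
have hsQ : s \in Q by apply: mem_nth.
have := hsQ; rewrite mem_Qs; last lia.
move=> /and3P [hts hsm hxs].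
have hs1 : 1 <= s <= m by lia.
have /and4P [hu hsz hall hcl] := vh s hs1.
have hsort : sorted ltn Q by apply: sorted_filter; [exact: ltn_trans | exact: iota_ltn_sorted].
have hC : count (predC (mem (c t))) (c s) <= r.+1.
  rewrite -size_filter.
  have -> : r.+1 = size ((k + t - 1) :: map (fun s' => k + s' - 1) (take r Q)).
    by rewrite /= size_map size_takel // ltnW.
  apply: uniq_leq_size; first exact: filter_uniq.
  move=> u; rewrite mem_filter => /andP [hnC huc].
  rewrite inE; case: (eqVneq u (k + t - 1)) => [->//|hne] /=.
  have := allP hcl u huc => /allP /(_ _ hxs); rewrite (negbTE hne) /= => /and4P [hu1 _ _ he].
  case: (ltngtP u (k + t - 1)) => hlt.
  - exfalso; move: he.
    have -> : maxn u (k + t - 1) = k + t - 1 by apply/maxn_idPr; lia.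
    have -> : minn u (k + t - 1) = u by apply/minn_idPl; lia.
    have -> : k + t - 1 - k + 1 = t by lia.
    have -> : (k + t - 1 < k) = false by lia.
    by move=> /= hin; move: hnC; rewrite /= hin.
  - move: he.
    have -> : maxn u (k + t - 1) = u by apply/maxn_idPl; lia.
    have -> : minn u (k + t - 1) = k + t - 1 by apply/minn_idPr; lia.
    have -> : (u < k) = false by lia.
    move=> /= hin.
    have hs'Q : u - k + 1 \in Q.
      rewrite mem_Qs; last lia.
      rewrite hin andbT; apply/andP; split; lia.
    apply/mapP; exists (u - k + 1); last lia.
    have hj := index_mem (u - k + 1) Q; rewrite hs'Q in hj.
    have hn := nth_index 0 hs'Q.
    case: (ltnP (index (u - k + 1) Q) r) => hjr.
      rewrite -hn -(nth_take 0 hjr); by apply: mem_nth; rewrite size_takel // ltnW.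
    exfalso; move: hjr; rewrite leq_eqVlt => /orP [/eqP hre | hrj].
      by move: hn; rewrite -hre -/s; lia.
    have := sorted_ltn_nth ltn_trans 0 hsort; move=> /(_ r (index (u - k + 1) Q)).
    rewrite !inE hr hj => /(_ isT isT hrj).
    rewrite hn -/s; lia.
  - by rewrite hlt eqxx in hne.
have := count_predC (mem (c t)) (c s).
rewrite (eqP hsz); lia.
Qed.

Lemma Ncl_lb k m c t v Zs : valid_history k m c -> 2 <= k -> 1 <= t <= m ->
  v \in c t -> uniq Zs -> (forall s, s \in Zs -> s \in Qs k m c t) ->
  (k - 1) + (k - 2) * count (fun s => v \in c s) Zs <= Ncl k c m (k + t - 1) v.
Proof.
move=> vh hk ht hv hZu hZQ.
have hZ : forall s, s \in Zs -> [&& t < s, s <= m & (k + t - 1) \in c s].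
  by move=> s /hZQ; rewrite mem_Qs //; lia.
have /and4P [hut hszt hallt _] := vh t ht.
have hvx : v < k + t - 1 by move: (allP hallt v hv); lia.
pose l s := [seq u <- c s | (k + t - 1 \in Lf k c s u) && (v \in Lf k c s u)].
pose SS := [seq mkS k m (Lf k c s u) | s <- t :: Zs, u <- l s].
have hR : forall s, s \in t :: Zs -> 1 <= s <= m.
  move=> s; rewrite inE => /orP [/eqP -> //|/hZ]; lia.
apply: (@leq_trans (size SS)).
  rewrite size_allpairs_dep /= leq_add //.
    rewrite size_filter.
    have -> : count (fun u => (k + t - 1 \in Lf k c t u) && (v \in Lf k c t u)) (c t)
            = count (fun u => u != v) (c t).
      apply: eq_in_count => u hu /=.
      rewrite /Lf !inE eqxx /= mem_filter hv andbT.
      have -> : (v == k + t - 1) = false by apply/negbTE; lia.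
      by rewrite eq_sym.
    by rewrite cnt1 // (eqP hszt).
  rewrite -sumn_scale leq_eqVlt; apply/orP; left; apply/eqP; congr sumn.
  apply/eq_in_map => s hs.
  have /and3P [h1 h2 h3] := hZ s hs.
  have /and4P [hus hszs halls _] := vh s (hR s (mem_behead (s := t :: Zs) hs)).
  rewrite size_filter.
  case hvs: (v \in c s) => /=.
    have -> : count (fun u => (k + t - 1 \in Lf k c s u) && (v \in Lf k c s u)) (c s)
            = count (fun u : nat => (u != k + t - 1) && (u != v)) (c s).
      apply: eq_in_count => u hu /=.
      rewrite /Lf !inE !mem_filter hvs h3 !andbT.
      have -> : (v == k + s - 1) = false by apply/negbTE; lia.
      have -> : (k + t - 1 == k + s - 1) = false by apply/negbTE; lia.
      by rewrite /= ![_ == u]eq_sym.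
    rewrite cnt2 // ?(eqP hszs) ?muln1 //; apply/eqP; lia.
  rewrite muln0; apply/esym/eqP; rewrite -leqn0 leqNgt -has_count; apply/hasP => -[u hu].
  rewrite /Lf !inE !mem_filter hvs andbF orbF => /andP [_ /eqP]; lia.
rewrite /Ncl cardE; apply: uniq_leq_size.
  apply: allpairs_uniq_dep.
  - rewrite /= hZu andbT; apply/negP => /hZ; lia.
  - move=> s hs; apply: filter_uniq.
    by have /and4P [] := vh s (hR s hs).
  - move=> p1 p2 /allpairsPdep [s1 [u1 [hs1 hu1 ->]]] /allpairsPdep [s2 [u2 [hs2 hu2 ->]]] /= E.
    move: hu1 hu2; rewrite !mem_filter => /andP [_ hu1] /andP [_ hu2].
    have [e1 e2] := @Lf_inj k m c s1 s2 u1 u2 vh (hR _ hs1) (hR _ hs2) hu1 hu2 E.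
    by subst.
move=> S /allpairsPdep [s [u [hs hu ->]]]; rewrite mem_enum.
move: hu; rewrite mem_filter => /andP [/andP [hx hv'] hu].
exact: in_Ncl vh (hR _ hs) hu hx hv'.
Qed.

Lemma sum_mulr (T : Type) (f : T -> nat) a (s : seq T) :
  \sum_(v <- s) (a * f v) = a * \sum_(v <- s) f v.
Proof.
elim: s => [|b s IH]; rewrite ?big_nil ?big_cons ?muln0 //.
by rewrite IH mulnDr.
Qed.

Lemma averaging k m c t : valid_history k m c -> 2 <= k -> 1 <= t <= m ->
  k - 1 <= size (Qs k m c t) ->
  exists2 v, v \in c t & k - 1 <= 2 * count (fun s => v \in c s) (take (k - 1) (Qs k m c t)).
Proof.
move=> vh hk ht hQ.
set Q := Qs k m c t; set Zs := take (k - 1) Q.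
have /and4P [hut hszt _ _] := vh t ht.
have hZs : size Zs = k - 1 by rewrite size_takel.
have hZQ : forall s, s \in Zs -> 1 <= s <= m.
  move=> s /mem_take; rewrite mem_Qs; last lia.
  move=> /and3P [h1 h2 _]; lia.
have Hsum : k * (k - 1) <= 2 * \sum_(v <- c t) count (fun s => v \in c s) Zs.
  have -> : \sum_(v <- c t) count (fun s => v \in c s) Zs
          = \sum_(v <- c t) \sum_(s <- Zs) (v \in c s : nat).
    by apply: eq_bigr => v _; rewrite count_sum.
  rewrite exchange_big /=.
  have -> : \sum_(s <- Zs) \sum_(v <- c t) (v \in c s : nat)
          = \sum_(s <- Zs) count (mem (c t)) (c s).
    apply: eq_big_seq => s hs.
    have /and4P [hus _ _ _] := vh s (hZQ s hs).
    by rewrite -count_sym // count_sum.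
  rewrite (big_nth 0) hZs.
  have : \sum_(0 <= i < k - 1) (k - 1 - i) <= \sum_(0 <= i < k - 1) count (mem (c t)) (c (nth 0 Zs i)).
    rewrite big_nat_cond [X in _ <= X]big_nat_cond; apply: leq_sum => i /andP [/andP [_ hi] _].
    rewrite /Zs nth_take //; apply: rank_bound => //.
    exact: leq_trans hi hQ.
  have := sum_tri (k - 1).
  have -> : (k - 1).+1 = k by lia.
  move=> E; rewrite [k * _]mulnC -E => h; exact: leq_mul (leqnn 2) h.
case hhas: (has (fun v => k - 1 <= 2 * count (fun s => v \in c s) Zs) (c t)).
  by move/hasP: hhas => [v hv hv2]; exists v.
exfalso.
have : \sum_(v <- c t) (2 * count (fun s => v \in c s) Zs) <= size (c t) * (k - 2).
  apply: sum_le_const => v hv.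
  have : ~~ (k - 1 <= 2 * count (fun s => v \in c s) Zs).
    by apply/negP => h; move/negP: hhas; apply; apply/hasP; exists v.
  move: (2 * count _ Zs) => X; lia.
rewrite sum_mulr (eqP hszt).
move: Hsum; nia.
Qed.

Theorem lemma5 (k m : nat) (c : nat -> seq nat) (par : nat -> nat) (x y : nat) :
  2 <= k -> 1 <= m ->
  valid_history k m c ->
  forest_choice k m c par ->
  F_edge k m par x y ->
  born k y < born k x ->
  2 * k - 2 < kt_deg k c m x ->
  (k ^ 2 - k) %/ 2 <= Ncl k c m x y.
Proof.
move=> hk hm vh fc hF hb hdeg.
have [hx hy] : (k <= x < k + m) /\ y = par x.
  move: hF; rewrite /F_edge => /orP [/andP [h /eqP ->] //| /andP [h /eqP hxy]].
  exfalso.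
  have ht : 1 <= y - k + 1 <= m by lia.
  have [hp _] := fc _ ht.
  have /and4P [_ _ hall _] := vh _ ht.
  have e : k + (y - k + 1) - 1 = y by lia.
  rewrite e -hxy in hp.
  have := allP hall x hp => hlt.
  have : x <= y by lia.
  move=> /(born_mono k); lia.
set t := x - k + 1.
have ht : 1 <= t <= m by rewrite /t; lia.
have ex : x = k + t - 1 by rewrite /t; lia.
rewrite ex in hdeg *.
have hQ : k - 1 <= size (Qs k m c t).
  have := @deg_bound k m c t vh ht; lia.
have [v hv hv2] := @averaging k m c t vh hk ht hQ.
have hN := @Ncl_lb k m c t v (take (k - 1) (Qs k m c t)) vh hk ht hv
  (take_uniq _ (filter_uniq _ (iota_uniq _ _))) (fun s hs => mem_take hs).
have [_ hmax] := fc t ht.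
have hvy : Ncl k c m (k + t - 1) v <= Ncl k c m (k + t - 1) y by rewrite hy ex; apply: hmax.
move: (count _ _) hv2 hN => n hv2 hN.
have h2 : (k - 2) * (k - 1) <= (k - 2) * (2 * n) by apply: leq_mul.
set N := Ncl k c m (k + t - 1) y.
apply: (@leq_trans ((N * 2) %/ 2)); last by rewrite mulnK.
apply: leq_div2r.
rewrite expnS expn1.
nia.
Qed.
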